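(* Let $\mathcal H$ be a hypergraph and let $m\ge l+1$ be integers with $l\ge 0$. Suppose the embedded homology satisfies $H_n(\mathcal H)=0$ for all $l\le n\le m$. Then for every $n$ with $l+1\le n\le m$: (i) $H_n(\Delta\mathcal H,\mathcal H)\cong H_n(\Delta\mathcal H)$; (ii) $H_n(\mathcal H,\delta\mathcal H)\cong H_{n-1}(\delta\mathcal H)$; (iii) there is a short exact sequence $$0\to H_n(\Delta\mathcal H)\to H_n(\Delta\mathcal H,\delta\mathcal H)\to H_{n-1}(\delta\mathcal H)\to 0,$$ where $H_n(\Delta\mathcal H,\delta\mathcal H)$ is the usual simplicial relative homology, isomorphic to the reduced homology $\tilde H_n(|\Delta\mathcal H|/|\delta\mathcal H|)$ of the quotient of geometric realizations. Consequently $0\to H_n(\Delta\mathcal H,\mathcal H)\to \tilde H_n(|\Delta\mathcal H|/|\delta\mathcal H|)\to H_n(\mathcal H,\delta\mathcal H)\to 0$ is exact.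
   Context: A hypergraph is a finite set $\mathcal H$ of nonempty finite subsets of a vertex set; elements are hyperedges, an $n$-hyperedge having $n+1$ vertices. The associated simplicial complex is $\Delta\mathcal H=\{\sigma\ne\emptyset:\sigma\subseteq\tau\text{ for some }\tau\in\mathcal H\}$ and the lower-associated simplicial complex is $\delta\mathcal H=\{\sigma\in\mathcal H:\ \text{every nonempty }\tau\subseteq\sigma\text{ lies in }\mathcal H\}$; thus $\delta\mathcal H\subseteq\mathcal H\subseteq\Delta\mathcal H$. Fix an abelian coefficient group $G$; $C_*(\Delta\mathcal H)$ is the simplicial chain complex with coefficients in $G$ and boundary $\partial$, $G(\mathcal H)_n$ the $G$-linear combinations of $n$-hyperedges, $\mathrm{Inf}_n(\mathcal H)=G(\mathcal H)_n\cap\partial_n^{-1}(G(\mathcal H)_{n-1})$. Embedded homology: $H_n(\mathcal H)=H_n(\mathrm{Inf}_*(\mathcal H))$; for $\mathcal A\subseteq\mathcal B$ relative embedded homology $H_n(\mathcal B,\mathcal A)=H_n(\mathrm{Inf}_*(\mathcal B)/\mathrm{Inf}_*(\mathcal A))$. For simplicial complexes these agree with ordinary simplicial (relative) homology with coefficients in $G$. *)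

(* Defs.v *)
From HB Require Import structures.
From mathcomp Require Import all_boot all_order all_algebra.
Set Implicit Arguments. Unset Strict Implicit. Unset Printing Implicit Defensive.
Import GRing.Theory.
Local Open Scope ring_scope.

(* Vertices are 'I_N (any finite vertex set, ordered by the natural order on
   'I_N which fixes the orientation of simplices); simplices / hyperedges are
   nonempty subsets of 'I_N; coefficients in an abelian group G : zmodType.  *)
Section Hypergraph.
Variables (N : nat) (G : zmodType).

Definition simplex := {set 'I_N}.

(* A (possibly inhomogeneous) chain: a G-valued function on simplices. *)
Definition chain := {ffun simplex -> G}.

(* Simplicial boundary:  d[v_0..v_k] = \sum_i (-1)^i [v_0.. ^v_i ..v_k],
   v_0 < ... < v_k.  The coefficient of tau = sigma \ {v} is (-1)^#{u in tau | u < v}.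
   The (non-augmented) boundary of a vertex is 0. *)
Definition bd (c : chain) : chain :=
  [ffun t : simplex => if t == set0 then 0 else
     \sum_(v : 'I_N | v \notin t)
        (if odd #|[set u in t | (val u < val v)%N]| then - c (v |: t)
         else c (v |: t))].

Definition deg (n : nat) (c : chain) : Prop :=
  forall s, c s != 0 -> #|s| = n.+1.
Definition supp_in (K : {set simplex}) (c : chain) : Prop :=
  forall s, c s != 0 -> s \in K.

Definition GH (K : {set simplex}) (n : nat) (c : chain) : Prop :=
  deg n c /\ supp_in K c.

Definition Inf (H : {set simplex}) (n : nat) (c : chain) : Prop :=
  GH H n c /\ GH H n.-1 (bd c).

Definition zeroP (n : nat) (c : chain) : Prop := c = 0.

(* n-th homology of the quotient chain complex P/Q (Q a subcomplex of P),
   presented as a subquotient  cycles / boundaries  of the chain group. *)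
Record subquot := SubQuot { sq_cyc : chain -> Prop; sq_bd : chain -> Prop }.

Definition rel_cycles (P Q : nat -> chain -> Prop) (n : nat) (x : chain) : Prop :=
  P n x /\ Q n.-1 (bd x).
Definition rel_bounds (P Q : nat -> chain -> Prop) (n : nat) (x : chain) : Prop :=
  exists y z, P n.+1 y /\ Q n z /\ x = bd y + z.
Definition homol (P Q : nat -> chain -> Prop) (n : nat) : subquot :=
  SubQuot (rel_cycles P Q n) (rel_bounds P Q n).

Definition Hemb (H : {set simplex}) (n : nat) := homol (Inf H) zeroP n.
Definition HembRel (B A : {set simplex}) (n : nat) := homol (Inf B) (Inf A) n.

Definition Hsimp (K : {set simplex}) (n : nat) := homol (GH K) zeroP n.
Definition HsimpRel (K L : {set simplex}) (n : nat) := homol (GH K) (GH L) n.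

Definition Delta (H : {set simplex}) : {set simplex} :=
  [set s : simplex | (s != set0) && [exists t in H, s \subset t]].
Definition delta (H : {set simplex}) : {set simplex} :=
  [set s in H | [forall t : simplex, ((t != set0) && (t \subset s)) ==> (t \in H)]].

(* Group homomorphisms between subquotients Z1/B1 -> Z2/B2, presented by a
   map on representatives that is well defined and additive modulo B2
   (every homomorphism of quotient groups arises this way, by choice). *)
Definition sq_hom (A B : subquot) (f : chain -> chain) : Prop :=
  [/\ forall x, sq_cyc A x -> sq_cyc B (f x),
      forall x y, sq_cyc A x -> sq_cyc A y -> sq_bd A (x - y) ->
                  sq_bd B (f x - f y) &
      forall x y, sq_cyc A x -> sq_cyc A y -> sq_bd B (f (x + y) - (f x + f y))].
Definition sq_inj (A B : subquot) (f : chain -> chain) : Prop :=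
  forall x y, sq_cyc A x -> sq_cyc A y -> sq_bd B (f x - f y) -> sq_bd A (x - y).
Definition sq_surj (A B : subquot) (f : chain -> chain) : Prop :=
  forall w, sq_cyc B w -> exists2 x, sq_cyc A x & sq_bd B (w - f x).

Definition sq_iso (A B : subquot) : Prop :=
  exists f, [/\ sq_hom A B f, sq_inj A B f & sq_surj A B f].

Definition sq_ses (A B C : subquot) : Prop :=
  exists f g, [/\ sq_hom A B f /\ sq_hom B C g, sq_inj A B f, sq_surj B C g,
    (forall x, sq_cyc A x -> sq_bd C (g (f x))) &
    (forall y, sq_cyc B y -> sq_bd C (g y) ->
       exists2 x, sq_cyc A x & sq_bd B (y - f x))].

Definition sq_trivial (A : subquot) : Prop := forall x, sq_cyc A x -> sq_bd A x.

End Hypergraph.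

(* Main.v *)
Require Import Defs.
From HB Require Import structures.
From mathcomp Require Import all_boot all_order all_algebra.
Set Implicit Arguments. Unset Strict Implicit. Unset Printing Implicit Defensive.
Import GRing.Theory.
Local Open Scope ring_scope.
From Stdlib Require Import ClassicalEpsilon.

Section Chains.
Variables (N : nat) (G : zmodType).
Local Notation chain := (chain N G).
Local Notation simplex := (simplex N).

Definition sgn (b : bool) (x : G) := if b then - x else x.

Lemma sgnB b x y : sgn b (x - y) = sgn b x - sgn b y.
Proof. by case: b; rewrite /sgn ?opprD. Qed.

Lemma sgn_sum b (I : finType) (P : pred I) (F : I -> G) :
  sgn b (\sum_(i | P i) F i) = \sum_(i | P i) sgn b (F i).
Proof. by case: b; rewrite /sgn ?sumrN. Qed.

Lemma sgnA a b x : sgn a (sgn b x) = sgn (a (+) b) x.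
Proof. by case: a; case: b; rewrite /sgn ?opprK. Qed.

Lemma sgnN b x : sgn (~~ b) x = - sgn b x.
Proof. by case: b; rewrite /sgn ?opprK. Qed.

Definition pp (t : simplex) (v : 'I_N) := odd #|[set u in t | (val u < val v)%N]|.

Lemma bdE (c : chain) t : bd c t =
  if t == set0 then 0 else \sum_(v | v \notin t) sgn (pp t v) (c (v |: t)).
Proof. by rewrite ffunE. Qed.

Lemma bdB (x y : chain) : bd (x - y) = bd x - bd y.
Proof.
apply/ffunP => t; rewrite !ffunE; case: ifP => _; first by rewrite subr0.
rewrite -sumrB; apply: eq_bigr => v _; rewrite !ffunE.
by case: ifP => _; rewrite ?opprD.
Qed.

Lemma bd0 : bd (0 : chain) = 0.
Proof. by have := bdB 0 0; rewrite subrr => ->; rewrite subrr. Qed.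

Lemma bdN (x : chain) : bd (- x) = - bd x.
Proof. by rewrite -sub0r bdB bd0 sub0r. Qed.

Lemma bdD (x y : chain) : bd (x + y) = bd x + bd y.
Proof. by have := bdB x (- y); rewrite opprK => ->; rewrite bdN opprK. Qed.

Lemma pp_U1 (t : simplex) (v w : 'I_N) : v \notin t ->
  pp (v |: t) w = (val v < val w)%N (+) pp t w.
Proof.
move=> vt; rewrite /pp.
have [lt|ge] := boolP (val v < val w)%N.
  have -> : [set u in v |: t | (val u < val w)%N] = v |: [set u in t | (val u < val w)%N].
    apply/setP => u; rewrite !inE; case: (eqVneq u v) => [->|] //=.
  by rewrite cardsU1 inE (negbTE vt) /= addnC oddD addbC.
have -> : [set u in v |: t | (val u < val w)%N] = [set u in t | (val u < val w)%N].
  apply/setP => u; rewrite !inE; case: (eqVneq u v) => [->|] //=; by rewrite (negbTE ge) andbF.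
by [].
Qed.

Lemma setU1_eq0 (v : 'I_N) (t : simplex) : (v |: t == set0) = false.
Proof. by apply/negbTE/set0Pn; exists v; rewrite setU11. Qed.

Lemma bdbd (c : chain) : bd (bd c) = 0.
Proof.
apply/ffunP => t; rewrite bdE ffunE; case: ifP => // t0.
pose F v w := sgn (pp t v (+) pp t w (+) (val v < val w)%N) (c (w |: (v |: t))).
pose C v w := [&& v \notin t, w != v & w \notin t].
transitivity (\sum_v \sum_w (if C v w then F v w else 0)).
  rewrite big_mkcond /=; apply: eq_bigr => v _.
  case: ifP => vt; last by rewrite big1 // => w _; rewrite /C vt.
  rewrite bdE setU1_eq0 sgn_sum big_mkcond /=; apply: eq_bigr => w _.
  rewrite /C vt in_setU1 negb_or /=.
  case: ifP => // _.
  rewrite sgnA /F pp_U1 //; congr sgn; by rewrite [X in _ (+) X]addbC addbA.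
rewrite (eq_bigr (fun v => \sum_w (if C v w && (val v < val w)%N then F v w else 0)
    + \sum_w (if C v w && ~~ (val v < val w)%N then F v w else 0))); last first.
  move=> v _; rewrite -big_split /=; apply: eq_bigr => w _.
  by case: (C v w); case: (val v < val w)%N; rewrite /= ?addr0 ?add0r.
rewrite big_split /= exchange_big /=.
rewrite -[X in _ + X = _](opprK) -sumrN; apply/eqP; rewrite subr_eq0; apply/eqP.
apply: eq_bigr => v _; rewrite -sumrN; apply: eq_bigr => w _.
rewrite /C.
have [->|nwv] := eqVneq w v; first by rewrite /= !andbF oppr0.
rewrite /=.
have [vw|wv|e] := ltngtP v w; first by rewrite !andbF oppr0.
  rewrite !andbT [(w \notin t) && _]andbC.
  case: ifP => _; last by rewrite oppr0.
  rewrite /F setUCA (_ : (val w < val v)%N = true) //.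
  rewrite (_ : (val v < val w)%N = false); last by apply/negbTE; rewrite -leqNgt ltnW.
  by rewrite addbT addbF -sgnN addbC.
by move/val_inj: e nwv => ->; rewrite eqxx.
Qed.


Definition dclosed (K : {set simplex}) :=
  forall s t : simplex, s \in K -> t \subset s -> t != set0 -> t \in K.

Lemma bd_supp (c : chain) (t : simplex) : bd c t != 0 ->
  t != set0 /\ exists2 v, v \notin t & c (v |: t) != 0.
Proof.
rewrite bdE; case: ifP => [_|t0 H]; first by rewrite eqxx.
split => //.
case: (pickP (fun v => (v \notin t) && (c (v |: t) != 0))) => [v /andP[]|H0].
  by exists v.
case/eqP: H; rewrite big1 // => v vt; move: (H0 v); rewrite vt /= => /negbFE/eqP ->.
by case: (pp t v); rewrite /sgn ?oppr0.
Qed.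

Lemma deg_bd n (c : chain) : deg n c -> deg n.-1 (bd c).
Proof.
move=> D t /bd_supp [t0 [v vt cv]]; have := D _ cv.
rewrite cardsU1 vt /= add1n => [[e]].
by rewrite e prednK // -e card_gt0.
Qed.

Lemma supp_bd K (c : chain) : dclosed K -> supp_in K c -> supp_in K (bd c).
Proof.
move=> dK S t /bd_supp [t0 [v vt cv]]; apply: (dK _ _ (S _ cv)) => //.
exact: subsetUr.
Qed.

Lemma deg0 n : deg n (0 : chain).
Proof. by move=> s; rewrite ffunE eqxx. Qed.

Lemma degB n (x y : chain) : deg n x -> deg n y -> deg n (x - y).
Proof.
move=> Dx Dy s; rewrite !ffunE => h.
case: (eqVneq (x s) 0) => [xs|/Dx//]; case: (eqVneq (y s) 0) => [ys|/Dy//].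
by rewrite xs ys subrr eqxx in h.
Qed.

Lemma supp0 K : supp_in K (0 : chain).
Proof. by move=> s; rewrite ffunE eqxx. Qed.

Lemma suppB K (x y : chain) : supp_in K x -> supp_in K y -> supp_in K (x - y).
Proof.
move=> Dx Dy s; rewrite !ffunE => h.
case: (eqVneq (x s) 0) => [xs|/Dx//]; case: (eqVneq (y s) 0) => [ys|/Dy//].
by rewrite xs ys subrr eqxx in h.
Qed.

Lemma GH0 K n : GH K n (0 : chain).
Proof. by split; [apply: deg0 | apply: supp0]. Qed.

Lemma GHB K n (x y : chain) : GH K n x -> GH K n y -> GH K n (x - y).
Proof. by move=> [??] [??]; split; [apply: degB | apply: suppB]. Qed.

Lemma GHD K n (x y : chain) : GH K n x -> GH K n y -> GH K n (x + y).
Proof.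
move=> gx gy; have := GHB gx (GHB (GH0 K n) gy).
by rewrite sub0r opprK.
Qed.

Lemma GH_bd K n (x : chain) : dclosed K -> GH K n x -> GH K n.-1 (bd x).
Proof. by move=> dK [??]; split; [apply: deg_bd | apply: supp_bd]. Qed.

Lemma GH_Inf K n (x : chain) : dclosed K -> GH K n x -> Inf K n x.
Proof. by move=> dK gx; split => //; apply: GH_bd. Qed.

Lemma GH_sub (K K' : {set simplex}) n (c : chain) :
  (forall s, s \in K -> s != set0 -> s \in K') -> GH K n c -> GH K' n c.
Proof.
move=> sub [dg sp]; split => // s cs; apply: sub (sp s cs) _.
by rewrite -card_gt0 (dg s cs).
Qed.

Lemma Inf_sub (K K' : {set simplex}) n (c : chain) :
  (forall s, s \in K -> s != set0 -> s \in K') -> Inf K n c -> Inf K' n c.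
Proof. by move=> sub [??]; split; apply: GH_sub sub _. Qed.

Definition cplx (P : nat -> chain -> Prop) := forall n,
  [/\ P n 0, (forall x y, P n x -> P n y -> P n (x - y)) &
      (forall x, P n x -> P n.-1 (bd x))].

Lemma cplxD P n x y : cplx P -> P n x -> P n y -> P n (x + y).
Proof.
move=> cP px py; have [p0 pB _] := cP n.
by have := pB _ _ px (pB _ _ p0 py); rewrite sub0r opprK.
Qed.

Lemma cplx_zero : cplx (@zeroP N G).
Proof.
move=> n; split => //; first by move=> x y -> ->; rewrite subrr.
by move=> x ->; rewrite bd0.
Qed.

Lemma cplx_GH K : dclosed K -> cplx (GH K).
Proof.
move=> dK n; split; [exact: GH0 | exact: GHB | by move=> x; apply: GH_bd].
Qed.

Lemma cplx_Inf K : cplx (Inf K).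
Proof.
move=> n; split.
- by split; [exact: GH0 | rewrite bd0; exact: GH0].
- by move=> x y [??] [??]; split; [exact: GHB | rewrite bdB; exact: GHB].
- by move=> x [_ ?]; split => //; rewrite bdbd; exact: GH0.
Qed.

Record good (A : subquot N G) : Prop := Good {
  g_c0 : sq_cyc A 0;
  g_cB : forall x y, sq_cyc A x -> sq_cyc A y -> sq_cyc A (x - y);
  g_b0 : sq_bd A 0;
  g_bB : forall x y, sq_bd A x -> sq_bd A y -> sq_bd A (x - y);
  g_bc : forall x, sq_bd A x -> sq_cyc A x }.

Lemma homol_good P Q n : cplx P -> cplx Q -> (forall k x, Q k x -> P k x) ->
  good (homol P Q n).
Proof.
move=> cP cQ QP; split => /=; cbv [rel_cycles rel_bounds].
- by have [? _ _] := cP n; have [? _ _] := cQ n.-1; split; rewrite ?bd0.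
- move=> x y [px qx] [py qy]; have [_ pB _] := cP n; have [_ qB _] := cQ n.-1.
  by split; [apply: pB | rewrite bdB; apply: qB].
- have [? _ _] := cP n.+1; have [? _ _] := cQ n.
  by exists 0, 0; rewrite bd0 addr0.
- move=> x y [y1 [z1 [p1 [q1 ->]]]] [y2 [z2 [p2 [q2 ->]]]].
  have [_ pB _] := cP n.+1; have [_ qB _] := cQ n.
  exists (y1 - y2), (z1 - z2); split; [exact: pB | split; [exact: qB |]].
  by rewrite bdB opprD addrACA.
- move=> x [y [z [py [qz ->]]]]; have [_ _ pb] := cP n.+1; have [_ _ qb] := cQ n.
  split; first by apply: cplxD => //; [exact: pb | exact: QP].
  by rewrite bdD bdbd add0r; exact: qb.
Qed.

Section Abs.
Implicit Types A B C : subquot N G.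

Definition eqm A a b := sq_bd A (a - b).

Lemma eqm_refl A a : good A -> eqm A a a.
Proof. by move=> gA; rewrite /eqm subrr; exact: g_b0. Qed.

Lemma eqm_sym A a b : good A -> eqm A a b -> eqm A b a.
Proof.
move=> gA h; have := g_bB gA (g_b0 gA) h.
by rewrite /eqm sub0r opprB.
Qed.

Lemma bdD_ A a b : good A -> sq_bd A a -> sq_bd A b -> sq_bd A (a + b).
Proof.
move=> gA ha hb; have := g_bB gA ha (g_bB gA (g_b0 gA) hb).
by rewrite sub0r opprK.
Qed.

Lemma cycD_ A a b : good A -> sq_cyc A a -> sq_cyc A b -> sq_cyc A (a + b).
Proof.
move=> gA ha hb; have := g_cB gA ha (g_cB gA (g_c0 gA) hb).
by rewrite sub0r opprK.
Qed.

Lemma eqm_trans A a b c : good A -> eqm A a b -> eqm A b c -> eqm A a c.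
Proof.
move=> gA h1 h2; have := bdD_ gA h1 h2.
by rewrite /eqm addrA subrK.
Qed.

Lemma eqm_add A a b c d : good A -> eqm A a b -> eqm A c d -> eqm A (a + c) (b + d).
Proof.
move=> gA h1 h2; have := bdD_ gA h1 h2.
by rewrite /eqm opprD addrACA.
Qed.

Lemma hom_bd A B f : good A -> good B -> sq_hom A B f ->
  forall x, sq_bd A x -> sq_bd B (f x).
Proof.
move=> gA gB [c h a] x bx.
have f0 : sq_bd B (f 0).
  have := a 0 0 (g_c0 gA) (g_c0 gA); rewrite addr0 opprD addrA subrr sub0r.
  by move=> hh; have := g_bB gB (g_b0 gB) hh; rewrite sub0r opprK.
have := h x 0 (g_bc gA bx) (g_c0 gA); rewrite subr0 => /(_ bx) hx.
by have := bdD_ gB hx f0; rewrite subrK.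
Qed.

Lemma inv_iso A B : good A -> good B -> sq_iso A B -> sq_iso B A.
Proof.
move=> gA gB [f [[fc fh fa] fi fs]].
pose g w := epsilon (inhabits (0 : chain)) (fun x => sq_cyc A x /\ sq_bd B (w - f x)).
have gs w : sq_cyc B w -> sq_cyc A (g w) /\ eqm B w (f (g w)).
  move=> cw; have [x ? ?] := fs w cw.
  apply: (epsilon_spec _ (fun x => sq_cyc A x /\ sq_bd B (w - f x))); by exists x.
have gw w1 w2 : sq_cyc B w1 -> sq_cyc B w2 -> eqm B w1 w2 -> eqm A (g w1) (g w2).
  move=> c1 c2 e; have [a1 e1] := gs _ c1; have [a2 e2] := gs _ c2.
  apply: fi => //; apply: (eqm_trans gB (eqm_sym gB e1)).
  exact: (eqm_trans gB e e2).
exists g; split.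
- split.
  + by move=> w /gs [].
  + exact: gw.
  + move=> w1 w2 c1 c2; have [a1 e1] := gs _ c1; have [a2 e2] := gs _ c2.
    have c12 := cycD_ gB c1 c2; have [a12 e12] := gs _ c12.
    apply: fi => //; first exact: cycD_.
    apply: (eqm_trans gB (eqm_sym gB e12)).
    apply: (eqm_trans gB (eqm_add gB e1 e2)).
    exact: eqm_sym gB (fa _ _ a1 a2).
- move=> w1 w2 c1 c2 e; have [a1 e1] := gs _ c1; have [a2 e2] := gs _ c2.
  apply: (eqm_trans gB e1); apply: (eqm_trans gB (fh _ _ a1 a2 e)).
  exact: eqm_sym.
- move=> x cx; exists (f x); first exact: fc.
  have [a e] := gs _ (fc _ cx).
  apply: fi => //; exact: eqm_sym.
Qed.

Lemma hom_comp A B C f g : good A -> good B -> good C ->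
  sq_hom A B f -> sq_hom B C g -> sq_hom A C (fun x => g (f x)).
Proof.
move=> gA gB gC [fc fh fa] [gc gh ga]; split.
- by move=> x /fc /gc.
- by move=> x y cx cy e; apply: gh; [exact: fc | exact: fc | exact: fh].
- move=> x y cx cy.
  have e1 := gh _ _ (fc _ (cycD_ gA cx cy)) (cycD_ gB (fc _ cx) (fc _ cy)) (fa _ _ cx cy).
  exact: (eqm_trans gC e1 (ga _ _ (fc _ cx) (fc _ cy))).
Qed.

Lemma ses_comp A' A B C C' : good A' -> good A -> good B -> good C -> good C' ->
  sq_iso A' A -> sq_ses A B C -> sq_iso C C' -> sq_ses A' B C'.
Proof.
move=> gA' gA gB gC gC' [a [ah ai as_]] [f [g [[fh gh] fi gs ex1 ex2]]]
  [c [ch ci cs]].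
exists (fun x => f (a x)), (fun y => c (g y)); split.
- split; [exact: (hom_comp gA' gA gB ah fh) | exact: (hom_comp gB gC gC' gh ch)].
- move=> x y cx cy e; case: ah => ac _ _; apply: ai => //; exact: fi (ac _ cx) (ac _ cy) e.
- move=> w cw; have [z cz e1] := cs w cw; have [y cy e2] := gs z cz.
  exists y => //; apply: (eqm_trans gC' e1); case: ch => cc chh _.
  by apply: chh => //; case: gh => gc _ _; exact: gc.
- move=> x cx; case: ah => ac _ _; apply: (hom_bd gC gC' ch); exact: ex1 (ac _ cx).
- move=> y cy e; case: gh => gc _ _.
  have e' : sq_bd C (g y).
    have := ci (g y) 0 (gc _ cy) (g_c0 gC).
    rewrite subr0; apply; have := hom_bd gC gC' ch (g_b0 gC).
    by move=> h0; have := bdD_ gC' e (g_bB gC' (g_b0 gC') h0); rewrite sub0r.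
  have [x cx ex] := ex2 y cy e'; have [x' cx' ex'] := as_ x cx.
  exists x' => //; apply: (eqm_trans gB ex); case: fh => _ fhh _.
  by case: ah => ac _ _; apply: fhh => //; exact: ac.
Qed.

End Abs.
End Chains.
Section Main.
Variables (N : nat) (G : zmodType) (H : {set {set 'I_N}}).
Local Notation chain := (chain N G).

Lemma dcD : dclosed (Delta H).
Proof.
move=> s t; rewrite !inE => /andP[_ /existsP[u /andP[uH su]]] ts t0.
by rewrite t0 /=; apply/existsP; exists u; rewrite uH (subset_trans ts su).
Qed.

Lemma dcd : dclosed (delta H).
Proof.
move=> s t; rewrite !inE => /andP[sH /forallP A] ts t0.
have tH : t \in H by have := A t; rewrite t0 ts.
rewrite tH /=; apply/forallP => u; apply/implyP => /andP[u0 ut].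
by have := A u; rewrite u0 (subset_trans ut ts).
Qed.

Lemma sub_dH s : s \in delta H -> s != set0 -> s \in H.
Proof. by rewrite inE => /andP[]. Qed.

Lemma sub_HD s : s \in H -> s != set0 -> s \in Delta H.
Proof. by move=> sH s0; rewrite inE s0 /=; apply/existsP; exists s; rewrite sH subxx. Qed.

Lemma sub_dD s : s \in delta H -> s != set0 -> s \in Delta H.
Proof. by move=> sd s0; apply: sub_HD (sub_dH sd s0) s0. Qed.

Lemma Hemb_fill k (x : chain) : sq_trivial (Hemb G H k) -> Inf H k x -> bd x = 0 ->
  exists2 u, Inf H k.+1 u & x = bd u.
Proof.
move=> T ix bx; have [y [z [iy [z0 e]]]] := T x (conj ix bx).
by exists y => //; move: z0; rewrite /zeroP e => ->; rewrite addr0.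
Qed.

Lemma good_Hsimp (K : {set {set 'I_N}}) k : dclosed K -> good (Hsimp G K k).
Proof. move=> dK; apply: homol_good; [exact: cplx_GH | exact: cplx_zero | move=> j x ->; exact: GH0]. Qed.

Lemma good_HsimpRel (K L : {set {set 'I_N}}) k : dclosed K -> dclosed L ->
  (forall s, s \in L -> s != set0 -> s \in K) -> good (HsimpRel G K L k).
Proof. move=> dK dL LK; apply: homol_good; [exact: cplx_GH | exact: cplx_GH | move=> j x; exact: GH_sub]. Qed.

Lemma good_HembRel (K L : {set {set 'I_N}}) k :
  (forall s, s \in L -> s != set0 -> s \in K) -> good (HembRel G K L k).
Proof. move=> LK; apply: homol_good; [exact: cplx_Inf | exact: cplx_Inf | move=> j x; exact: Inf_sub]. Qed.

End Main.

Section Main2.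
Variables (N : nat) (G : zmodType) (H : {set {set 'I_N}}) (n : nat).
Local Notation chain := (chain N G).
Hypothesis T1 : sq_trivial (Hemb G H n.+1).
Hypothesis T0 : sq_trivial (Hemb G H n).

Lemma iso_i : sq_iso (HembRel G (Delta H) H n.+1) (Hsimp G (Delta H) n.+1).
Proof.
apply: inv_iso; [exact: good_Hsimp (@dcD _ H) | exact: good_HembRel (@sub_HD _ H) |].
exists (fun x => x); split; [split| |] => /=; cbv [rel_cycles rel_bounds zeroP].
- move=> x [gx bx]; split; first exact: GH_Inf (@dcD _ H) gx.
  by rewrite bx; have [] := @cplx_Inf _ G H n.
- move=> x y _ _ [w [z [gw [z0 e]]]]; exists w, z; split; first exact: GH_Inf (@dcD _ H) gw.
  by split => //; rewrite z0; have [] := @cplx_Inf _ G H n.+1.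
- move=> x y _ _; exists 0, 0; rewrite bd0 addr0 subrr; split; last split => //.
    by have [] := @cplx_Inf _ G (Delta H) n.+2.
  by have [] := @cplx_Inf _ G H n.+1.
- move=> x y [gx bx] [gy by_] [w [z [iw [iz e]]]].
  have ez : z = (x - y) - bd w by rewrite e [bd w + z]addrC addrK.
  have bz : bd z = 0 by rewrite ez !bdB bdbd bx by_ !subrr.
  have [u iu zu] := Hemb_fill T1 iz bz.
  exists (w + u), 0; split; first by apply: GHD; [by case: iw | apply: GH_sub (@sub_HD _ H) _; case: iu].
  by split => //; rewrite e zu bdD addr0.
- move=> w [iw bw]; have [u iu wu] := Hemb_fill T0 bw (bdbd w).
  exists (w - u).
    split; last by rewrite bdB wu subrr.
    by apply: GHB; [case: iw | apply: GH_sub (@sub_HD _ H) _; case: iu].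
  exists 0, u; split; first by have [] := @cplx_Inf _ G (Delta H) n.+2.
  by split => //; rewrite bd0 add0r subKr.
Qed.

Lemma iso_ii : sq_iso (HembRel G H (delta H) n.+1) (Hsimp G (delta H) n).
Proof.
exists (@bd N G); split; [split| |] => /=; cbv [rel_cycles rel_bounds zeroP].
- move=> x [ix bx]; split; [by case: bx | exact: bdbd].
- move=> x y _ _ [w [z [iw [iz e]]]]; exists z, 0; split; first by case: iz.
  by split => //; rewrite -bdB e bdD bdbd add0r addr0.
- move=> x y _ _; exists 0, 0; rewrite bd0 addr0 bdD subrr; split; last by [].
  exact: GH0.
- move=> x y [ix bx] [iy by_] [w [z [gw [z0 e]]]].
  have iw : Inf H n.+1 w by apply: Inf_sub (@sub_dH _ H) _; exact: GH_Inf (@dcd _ H) gw.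
  have iq : Inf H n.+1 (x - y - w).
    have [_ iB _] := @cplx_Inf _ G H n.+1.
    by apply: (iB) => //; apply: (iB).
  have bq : bd (x - y - w) = 0 by rewrite !bdB e z0 addr0 subrr.
  have [u iu qu] := Hemb_fill T1 iq bq.
  exists u, w; split => //; split; first exact: GH_Inf (@dcd _ H) gw.
  by rewrite -qu subrK.
- move=> w [gw bw].
  have iw : Inf H n w by apply: Inf_sub (@sub_dH _ H) _; exact: GH_Inf (@dcd _ H) gw.
  have [u iu wu] := Hemb_fill T0 iw bw.
  exists u; first by split => //; rewrite -wu; exact: GH_Inf (@dcd _ H) gw.
  exists 0, 0; split; first exact: GH0.
  by split => //; rewrite wu bd0 subrr addr0.
Qed.

Lemma ses_iii : sq_ses (Hsimp G (Delta H) n.+1) (HsimpRel G (Delta H) (delta H) n.+1)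
  (Hsimp G (delta H) n).
Proof.
exists (fun x => x), (@bd N G); split; [split; split| | | |] => /=;
  cbv [rel_cycles rel_bounds zeroP].
- by move=> x [gx bx]; split => //; rewrite bx; exact: GH0.
- move=> x y _ _ [w [z [gw [z0 e]]]]; exists w, z; split => //.
  by split => //; rewrite z0; exact: GH0.
- move=> x y _ _; exists 0, 0; rewrite bd0 addr0 subrr; split; first exact: GH0.
  by split => //; exact: GH0.
- by move=> x [gx bx]; split => //; exact: bdbd.
- move=> x y _ _ [w [z [gw [gz e]]]]; exists z, 0; split => //.
  by split => //; rewrite -bdB e bdD bdbd add0r addr0.
- move=> x y _ _; exists 0, 0; rewrite bd0 addr0 bdD subrr; split; last by [].
  exact: GH0.
- move=> x y [gx bx] [gy by_] [w [z [gw [gz e]]]].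
  have ez : z = (x - y) - bd w by rewrite e [bd w + z]addrC addrK.
  have bz : bd z = 0 by rewrite ez !bdB bdbd bx by_ !subrr.
  have iz : Inf H n.+1 z by apply: Inf_sub (@sub_dH _ H) _; exact: GH_Inf (@dcd _ H) gz.
  have [u iu zu] := Hemb_fill T1 iz bz.
  exists (w + u), 0; split; first by apply: GHD => //; apply: GH_sub (@sub_HD _ H) _; case: iu.
  by split => //; rewrite e zu bdD addr0.
- move=> w [gw bw].
  have iw : Inf H n w by apply: Inf_sub (@sub_dH _ H) _; exact: GH_Inf (@dcd _ H) gw.
  have [u iu wu] := Hemb_fill T0 iw bw.
  exists u; first by split; [apply: GH_sub (@sub_HD _ H) _; case: iu | rewrite -wu].
  exists 0, 0; split; first exact: GH0.
  by split => //; rewrite wu bd0 subrr addr0.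
- move=> x [gx bx]; exists 0, 0; split; first exact: GH0.
  by split => //; rewrite bx bd0 addr0.
- move=> y [gy by_] [w [z [gw [z0 e]]]].
  exists (y - w).
    split; first by apply: GHB => //; exact: GH_sub (@sub_dD _ H) gw.
    by rewrite bdB e z0 addr0 subrr.
  exists 0, w; split; first exact: GH0.
  by split => //; rewrite bd0 add0r subKr.
Qed.

End Main2.

Local Close Scope ring_scope.

Theorem mainTheorem6 (N : nat) (G : zmodType) (H : {set {set 'I_N}}) (l m : nat) :
  set0 \notin H ->
  (l.+1 <= m)%N ->
  (forall n, (l <= n <= m)%N -> sq_trivial (Hemb G H n)) ->
  forall n, (l.+1 <= n <= m)%N ->
    [/\ sq_iso (HembRel G (Delta H) H n) (Hsimp G (Delta H) n),
        sq_iso (HembRel G H (delta H) n) (Hsimp G (delta H) n.-1),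
        sq_ses (Hsimp G (Delta H) n) (HsimpRel G (Delta H) (delta H) n)
               (Hsimp G (delta H) n.-1) &
        sq_ses (HembRel G (Delta H) H n) (HsimpRel G (Delta H) (delta H) n)
               (HembRel G H (delta H) n)].
Proof.
move=> _ _ T [//|n] /andP[ln nm].
have T1 : sq_trivial (Hemb G H n.+1) by apply: T; rewrite nm andbT ltnW.
have T0 : sq_trivial (Hemb G H n) by apply: T; apply/andP; split; [by rewrite -ltnS | exact: ltnW].
have i1 := iso_i T1 T0; have i2 := iso_ii T1 T0; have s3 := ses_iii T1 T0.
split => //.
apply: (ses_comp _ _ _ _ _ i1 s3 (inv_iso _ _ i2)).
- exact: good_HembRel (@sub_HD _ H).
- exact: good_Hsimp (@dcD _ H).
- exact: good_HsimpRel (@dcD _ H) (@dcd _ H) (@sub_dD _ H).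
- exact: good_Hsimp (@dcd _ H).
- exact: good_HembRel (@sub_dH _ H).
- exact: good_HembRel (@sub_dH _ H).
- exact: good_Hsimp (@dcd _ H).
Qed.
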